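(* Let $\Gamma$ be a finite connected tetravalent $G$-half-arc-transitive graph for some $G\le\mathrm{Aut}(\Gamma)$ with $\mathrm{rad}_G(\Gamma)=3$ and $\mathrm{att}_G(\Gamma)=2$, and let $\Lambda=\mathrm{Alt}_G(\Gamma)$. Then the group $G$ induces an action on $\Lambda$ which is transitive on the $2$-arcs of $\Lambda$, and $\mathrm{Dart}(\Lambda)\cong\Gamma$. In fact, there is an isomorphism $\Psi\colon\mathrm{Dart}(\Lambda)\to\Gamma$ mapping the natural orientation of $\mathrm{Dart}(\Lambda)$ to one of the two $G$-induced orientations of $\Gamma$.
   Context: All graphs are finite and simple. For a tetravalent graph $\Gamma$ and $G\le \mathrm{Aut}(\Gamma)$, $\Gamma$ is $G$-half-arc-transitive if $G$ acts transitively on vertices and edges but not on arcs; then the two $G$-orbits on arcs give two paired ($G$-induced) orientations of the edges, and each vertex is the tail of two and head of two incident edges. A $G$-alternating cycle is a cycle in which every two consecutive edges have a common head or a common tail. All have length $2\,\mathrm{rad}_G(\Gamma)$, and any two sharing a vertex meet in $\mathrm{att}_G(\Gamma)$ vertices. $\mathrm{Alt}_G(\Gamma)$ is the graph whose vertices are the $G$-alternating cycles, two adjacent iff they share a vertex; $G$ acts on it naturally. A $2$-arc is a walk $(x,y,z)$ with $x\ne z$. For a cubic graph $\Lambda$, $\mathrm{Dart}(\Lambda)$ has as vertices the arcs of $\Lambda$, with $(u,v)$ adjacent to $(u',v')$ iff either $u'=v$ and $u\neq v'$, or $u=v'$ and $u'\neq v$; its natural orientation orients the edge $(u,v)(v,w)$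 from $(u,v)$ to $(v,w)$. *)

(* Defs.v *)
From mathcomp Require Import all_boot fingroup perm.
From mathcomp Require Import boolp.

Set Implicit Arguments.
Unset Strict Implicit.
Unset Printing Implicit Defensive.

Section Defs.
Variable T : finType.

(* A simple graph is a symmetric irreflexive relation e on T. *)

Definition is_aut_group (e : rel T) (G : {group {perm T}}) : Prop :=
  forall g, g \in G -> forall x y, e (g x) (g y) = e x y.

Definition tetravalent (e : rel T) : Prop := forall x, #|[set y | e x y]| = 4.

Definition connected_graph (e : rel T) : Prop := forall x y, connect e x y.

Definition half_arc_transitive (e : rel T) (G : {group {perm T}}) : Prop :=
  [/\ (forall x y, exists2 g, g \in G & g x = y),
      (forall x y u v, e x y -> e u v ->
         exists2 g, g \in G & [set g x; g y] = [set u; v])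
    & ~ (forall x y u v, e x y -> e u v ->
         exists2 g, g \in G & (g x = u /\ g y = v))].

(* The G-orbit of the arc (x0, y0): the G-induced orientation containing it;
   O u v means the edge uv is oriented from u (tail) to v (head). *)
Definition arc_orbit (G : {group {perm T}}) (x0 y0 : T) : rel T :=
  fun u v => [exists g in G, (g x0 == u) && (g y0 == v)].

(* the cyclic sequence s (read as a cycle) is O-alternating: at each vertex,
   the two incident cycle edges have a common head or a common tail *)
Definition alternating (O : rel T) (s : seq T) : bool :=
  all (fun x => (O (prev s x) x && O (next s x) x)
             || (O x (prev s x) && O x (next s x))) s.

Definition cycle_edges (s : seq T) : {set {set T}} :=
  [set [set x; next s x] | x in s].

Definition alt_cycle (e : rel T) (O : rel T) (C : {set {set T}}) : Prop :=
  exists s : seq T,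
    [/\ uniq s, 3 <= size s, path.cycle e s, alternating O s & C = cycle_edges s].

Definition alt_cycleb (e : rel T) (O : rel T) (C : {set {set T}}) : bool :=
  `[< alt_cycle e O C >].

Definition cycle_verts (C : {set {set T}}) : {set T} := cover C.

(* adjacency in Alt_G(Gamma): distinct cycles sharing a vertex *)
Definition alt_adj (C D : {set {set T}}) : bool :=
  (C != D) && (cycle_verts C :&: cycle_verts D != set0).

Definition act_cycle (g : {perm T}) (C : {set {set T}}) : {set {set T}} :=
  [set g @: E | E : {set T} in C].

Definition AltV (e O : rel T) := {C : {set {set T}} | alt_cycleb e O C}.

Definition alt_rel (e O : rel T) : rel (AltV e O) :=
  fun C D => alt_adj (val C) (val D).

End Defs.
Arguments alt_rel {T} e O.
Arguments AltV {T} e O.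

Section Dart.
Variables (L : finType) (r : rel L).

Definition DartV := {p : L * L | r p.1 p.2}.

Definition dart_adj : rel DartV :=
  fun a b => let: (u, v) := val a in let: (u', v') := val b in
    ((u' == v) && (u != v')) || ((u == v') && (u' != v)).

Definition dart_arc : rel DartV :=
  fun a b => let: (u, v) := val a in let: (u', w) := val b in
    (u' == v) && (u != w).

End Dart.

(* Main.v *)
Require Import Defs.
From mathcomp Require Import all_boot fingroup perm.
From mathcomp Require Import boolp zify.

Set Implicit Arguments.
Unset Strict Implicit.
Unset Printing Implicit Defensive.

Section SeqLemmas.
Variable V : eqType.

Lemma next_head (x y : V) r : x != y -> next [:: x, y & r] x = y.
Proof. by move=> _; rewrite /= eqxx. Qed.

Lemma prev_neq_next (s : seq V) x : uniq s -> 3 <= size s -> x \in s ->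
  prev s x != next s x.
Proof.
move=> us ss xs; case: (rot_to xs) => i s' rs.
have ur : uniq (rot i s) by rewrite rot_uniq.
rewrite -(prev_rot i us) -(next_rot i us) rs.
have: 3 <= size (x :: s') by rewrite -rs size_rot.
rewrite rs in ur.
case: s' ur rs => [|y [|z r]] // ur _ _.
apply/negP => /eqP E.
have E2 : next [:: x, y, z & r] (next [:: x, y, z & r] x) = x.
  by rewrite -{1}E next_prev.
move: ur E2; rewrite /= !inE => /andP [] /norP [xy /norP [xz _]] /andP [] /norP [yz _] _.
rewrite eqxx eq_sym (negbTE xy) eqxx.
move=> zx; move: xz; by rewrite zx eqxx.
Qed.
End SeqLemmas.

Section Flat.
Variables (A V : eqType) (f g : A -> V).
Definition flat2 (s : seq A) := flatten [seq [:: f x; g x] | x <- s].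

Lemma flat2_cons x s : flat2 (x :: s) = f x :: g x :: flat2 s.
Proof. by []. Qed.

Lemma mem_flat2 z s : (z \in flat2 s) = has (fun x => (z == f x) || (z == g x)) s.
Proof. by elim: s => [|x s IH] //=; rewrite !inE -IH orbA. Qed.

Lemma size_flat2 s : size (flat2 s) = (size s).*2.
Proof. by elim: s => [|x s IH] //=; rewrite IH doubleS. Qed.

Lemma uniq_flat2 s : uniq s -> {in s &, injective f} -> {in s &, injective g} ->
  {in s &, forall x y, f x != g y} -> uniq (flat2 s).
Proof.
elim: s => [|x s IH] // /= /andP [xs us] injf injg fg.
have injf' : {in s &, injective f}.
  by move=> a b ha hb; apply: injf; rewrite inE ?ha ?hb orbT.
have injg' : {in s &, injective g}.
  by move=> a b ha hb; apply: injg; rewrite inE ?ha ?hb orbT.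
have fg' : {in s &, forall x y, f x != g y}.
  by move=> a b ha hb; apply: fg; rewrite inE ?ha ?hb orbT.
rewrite IH // andbT inE negb_or fg ?inE ?eqxx //= !mem_flat2.
apply/andP; split; apply/hasPn => y ys; rewrite negb_or.
- apply/andP; split; last by apply: fg; rewrite inE ?eqxx ?ys ?orbT.
  apply/negP => /eqP E; move: xs; rewrite (injf x y) ?ys // inE ?eqxx ?ys ?orbT //.
- apply/andP; split.
    by rewrite eq_sym; apply: fg; rewrite inE ?eqxx ?ys ?orbT.
  apply/negP => /eqP E; move: xs; rewrite (injg x y) ?ys // inE ?eqxx ?ys ?orbT //.
Qed.

Lemma path_flat2 (R : rel A) (E : rel V) (D : pred A) c0 s :
  (forall c, D c -> E (f c) (g c)) ->
  (forall c c', D c -> R c c' -> E (g c) (f c')) ->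
  D c0 -> all D s -> path R c0 s -> path E (g c0) (flat2 s).
Proof.
move=> H1 H2; elim: s c0 => [|c s IH] c0 //= Dc0 /andP [Dc Ds] /andP [Rc Ps].
by rewrite H2 // H1 // IH.
Qed.

Lemma cycle_flat2 (R : rel A) (E : rel V) c0 s :
  (forall c, c \in c0 :: s -> E (f c) (g c)) ->
  (forall c c', c \in c0 :: s -> R c c' -> E (g c) (f c')) ->
  path.cycle R (c0 :: s) -> path.cycle E (flat2 (c0 :: s)).
Proof.
move=> H1 H2 /= P.
have := @path_flat2 R E (mem (c0 :: s)) c0 (rcons s c0) H1 H2.
move=> /(_ (mem_head _ _)).
have HD : all (mem (c0 :: s)) (rcons s c0).
  by apply/allP => z; rewrite mem_rcons.
move=> /(_ HD P).
rewrite /flat2 map_rcons flatten_rcons cat_path /= => /andP [P1 /andP [E1 _]].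
by rewrite H1 ?inE ?eqxx //= rcons_path P1.
Qed.
End Flat.

Section CycleEdges.
Variable T : finType.

Lemma set2_eq (a b c d : T) : [set a; b] = [set c; d] ->
  (a = c /\ b = d) \/ (a = d /\ b = c).
Proof.
move=> E.
have ha : a \in [set c; d] by rewrite -E !inE eqxx.
have hb : b \in [set c; d] by rewrite -E !inE eqxx orbT.
have hc : c \in [set a; b] by rewrite E !inE eqxx.
have hd : d \in [set a; b] by rewrite E !inE eqxx orbT.
move: ha hb hc hd; rewrite !inE.
case/orP => /eqP ha; case/orP => /eqP hb; case/orP => /eqP hc;
  case/orP => /eqP hd; subst; auto.
Qed.

Lemma mem_cycle_edges (s : seq T) E :
  reflect (exists2 x, x \in s & E = [set x; next s x]) (E \in cycle_edges s).
Proof. exact: imsetP. Qed.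

Lemma cover_cycle_edges (s : seq T) : cover (cycle_edges s) = [set x in s].
Proof.
apply/setP => z; rewrite inE; apply/bigcupP/idP.
- move=> [E /mem_cycle_edges [x xs ->]]; rewrite !inE => /orP [] /eqP ->//.
  by rewrite mem_next.
- move=> zs; exists [set z; next s z]; last by rewrite !inE eqxx.
  by apply/mem_cycle_edges; exists z.
Qed.

Lemma card_cycle_edges (s : seq T) : uniq s -> 3 <= size s ->
  #|cycle_edges s| = size s.
Proof.
move=> us ss; rewrite /cycle_edges card_in_imset; first by apply/card_uniqP.
move=> x y xs ys /set2_eq [[] //|[E1 E2]].
have : prev s x = next s x.
  by rewrite E2 {1}E1 prev_next.
by move/eqP; rewrite (negbTE (prev_neq_next us ss xs)).
Qed.
End CycleEdges.

Section Main.
Variables (T : finType) (e : rel T) (G : {group {perm T}}) (x0 y0 : T).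
Hypotheses (esym : symmetric e) (eirr : irreflexive e)
  (conn : connected_graph e) (tetra : tetravalent e)
  (autG : is_aut_group e G) (hatG : half_arc_transitive e G) (exy : e x0 y0).
Local Notation O := (arc_orbit G x0 y0).
Local Open Scope group_scope.

Lemma OP u v : reflect (exists2 g, g \in G & g x0 = u /\ g y0 = v) (O u v).
Proof.
apply: (iffP existsP) => [[g /andP [gG /andP [/eqP h1 /eqP h2]]]|[g gG [h1 h2]]].
  by exists g.
by exists g; rewrite gG h1 h2 !eqxx.
Qed.

Lemma O_e u v : O u v -> e u v.
Proof. by case/OP => g gG [<- <-]; rewrite autG. Qed.

Lemma O_G g u v : g \in G -> O (g u) (g v) = O u v.
Proof.
move=> gG; apply/OP/OP => [[h hG [h1 h2]]|[h hG [h1 h2]]].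
  exists (h * g^-1); first by rewrite groupM ?groupV.
  by rewrite !permM h1 h2 !permK.
exists (h * g); first by rewrite groupM.
by rewrite !permM h1 h2.
Qed.

Lemma vtxT u v : exists2 g, g \in G & g u = v.
Proof. by case: hatG => H _ _; apply: H. Qed.

Lemma e_O u v : e u v -> O u v || O v u.
Proof.
case: hatG => _ H _ euv; have [g gG E] := H _ _ _ _ exy euv.
have hu : u \in [set g x0; g y0] by rewrite E !inE eqxx.
have hv : v \in [set g x0; g y0] by rewrite E !inE eqxx orbT.
move: hu hv; rewrite !inE => /orP [] /eqP hu /orP [] /eqP hv; subst u v.
- by rewrite eirr in euv.
- by apply/orP; left; apply/OP; exists g.
- by apply/orP; right; apply/OP; exists g.
- by rewrite eirr in euv.
Qed.

Lemma O_asym u v : O u v -> O v u -> False.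
Proof.
move=> /OP [g1 g1G [h11 h12]] /OP [g2 g2G [h21 h22]].
case: hatG => _ Het; apply.
have rev : exists2 k, k \in G & k x0 = y0 /\ k y0 = x0.
  exists (g1 * g2^-1); first by rewrite groupM ?groupV.
  by rewrite !permM h11 h12 -h21 -h22 !permK.
case: rev => k kG [k1 k2].
have all : forall x y, e x y -> exists2 g, g \in G & g x0 = x /\ g y0 = y.
  move=> x y /e_O /orP [/OP //|/OP [g gG [gx gy]]].
  exists (k * g); first by rewrite groupM.
  by rewrite !permM k1 k2 gx gy.
move=> x y u' v' /all [a aG [a1 a2]] /all [b bG [b1 b2]].
exists (a^-1 * b); first by rewrite groupM ?groupV.
by rewrite !permM -a1 -a2 !permK.
Qed.

Lemma arcT u v u' v' : O u v -> O u' v' ->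
  exists2 g, g \in G & g u = u' /\ g v = v'.
Proof.
move=> /OP [a aG [a1 a2]] /OP [b bG [b1 b2]].
exists (a^-1 * b); first by rewrite groupM ?groupV.
by rewrite !permM -a1 -a2 !permK.
Qed.

Lemma outd_G g x : g \in G -> #|[set y | O (g x) y]| = #|[set y | O x y]|.
Proof.
move=> gG; have -> : [set y | O (g x) y] = g @: [set y | O x y].
  apply/setP => z; rewrite inE; apply/idP/imsetP.
    by move=> H; exists (g^-1 z); rewrite ?permKV // inE -(O_G x (g^-1 z) gG) permKV.
  by case=> y; rewrite inE => H ->; rewrite O_G.
by rewrite card_imset //; apply: perm_inj.
Qed.

Lemma ind_G g x : g \in G -> #|[set y | O y (g x)]| = #|[set y | O y x]|.
Proof.
move=> gG; have -> : [set y | O y (g x)] = g @: [set y | O y x].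
  apply/setP => z; rewrite inE; apply/idP/imsetP.
    by move=> H; exists (g^-1 z); rewrite ?permKV // inE -(O_G (g^-1 z) x gG) permKV.
  by case=> y; rewrite inE => H ->; rewrite O_G.
by rewrite card_imset //; apply: perm_inj.
Qed.

Lemma outd_const x : #|[set y | O x y]| = #|[set y | O x0 y]|.
Proof. by have [g gG <-] := vtxT x0 x; rewrite outd_G. Qed.

Lemma ind_const x : #|[set y | O y x]| = #|[set y | O y x0]|.
Proof. by have [g gG <-] := vtxT x0 x; rewrite ind_G. Qed.

Lemma deg_sum x : #|[set y | O x y]| + #|[set y | O y x]| = 4.
Proof.
rewrite -cardsUI.
have -> : [set y | O x y] :&: [set y | O y x] = set0.
  apply/setP => z; rewrite !inE; apply/negP => /andP [h1 h2].
  exact: (O_asym h1 h2).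
have -> : [set y | O x y] :|: [set y | O y x] = [set y | e x y].
  apply/setP => z; rewrite !inE; apply/idP/idP.
    by case/orP => [/O_e //|/O_e]; rewrite esym.
  by move/e_O.
by rewrite cards0 addn0 tetra.
Qed.

Lemma outdeg x : #|[set y | O x y]| = 2.
Proof.
have H : (\sum_(x : T) #|[set y | O x y]| = \sum_(x : T) #|[set y | O y x]|)%N.
  have E1 : forall x, #|[set y | O x y]| = (\sum_(y : T) (O x y : nat))%N.
    by move=> z; rewrite -sum1dep_card big_mkcond.
  have E2 : forall x, #|[set y | O y x]| = (\sum_(y : T) (O y x : nat))%N.
    by move=> z; rewrite -sum1dep_card big_mkcond.
  rewrite (eq_bigr _ (fun z _ => E1 z)) (eq_bigr _ (fun z _ => E2 z)).
  exact: exchange_big.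
rewrite (eq_bigr _ (fun z _ => outd_const z)) (eq_bigr _ (fun z _ => ind_const z)) in H.
rewrite !sum_nat_const in H.
have Tpos : 0 < #|T| by apply/card_gt0P; exists x0.
move/eqP: H; rewrite eqn_pmul2l // => /eqP H.
have := deg_sum x0; rewrite -H outd_const => h; lia.
Qed.

Lemma indeg x : #|[set y | O y x]| = 2.
Proof. by have := deg_sum x; rewrite outdeg; lia. Qed.

Lemma O00 : O x0 y0.
Proof. by apply/OP; exists 1; rewrite ?group1 ?perm1. Qed.

Definition oth_out t h := odflt h [pick z | O t z && (z != h)].
Definition oth_in h t := odflt t [pick z | O z h && (z != t)].

Lemma two_elems (A : {set T}) h : #|A| = 2 -> h \in A ->
  exists w, [/\ w \in A, w != h & forall z, z \in A -> z = h \/ z = w].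
Proof.
move=> cA hA; have : #|A :\ h| = 1%N by move: cA; rewrite (cardsD1 h) hA; case.
move/eqP/cards1P => [w Aw]; exists w; split.
- have : w \in A :\ h by rewrite Aw inE.
  by case/setD1P.
- have : w \in A :\ h by rewrite Aw inE.
  by case/setD1P.
- move=> z zA; case: (eqVneq z h) => [->|zh]; first by left.
  have : z \in A :\ h by apply/setD1P.
  by rewrite Aw inE => /eqP; right.
Qed.

Lemma oth_outP t h : O t h ->
  [/\ O t (oth_out t h), oth_out t h != h &
      forall z, O t z -> z = h \/ z = oth_out t h].
Proof.
move=> th; have hA : h \in [set y | O t y] by rewrite inE.
have [w [wA wh wall]] := two_elems (outdeg t) hA.
have Hw : forall z, O t z -> z != h -> z = w.
  move=> z tz zh; case: (wall z); rewrite ?inE // => E; by rewrite E eqxx in zh.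
have -> : oth_out t h = w.
  rewrite /oth_out; case: pickP => [z /andP [tz zh]|H] /=; first exact: Hw.
  by have := H w; rewrite -(in_set (fun y => O t y)) wA wh.
split => //; first by rewrite inE in wA.
by move=> z tz; apply: wall; rewrite inE.
Qed.

Lemma oth_inP h t : O t h ->
  [/\ O (oth_in h t) h, oth_in h t != t &
      forall z, O z h -> z = t \/ z = oth_in h t].
Proof.
move=> th; have hA : t \in [set y | O y h] by rewrite inE.
have [w [wA wh wall]] := two_elems (indeg h) hA.
have Hw : forall z, O z h -> z != t -> z = w.
  move=> z tz zh; case: (wall z); rewrite ?inE // => E; by rewrite E eqxx in zh.
have -> : oth_in h t = w.
  rewrite /oth_in; case: pickP => [z /andP [tz zh]|H] /=; first exact: Hw.
  by have := H w; rewrite -(in_set (fun y => O y h)) wA wh.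
split => //; first by rewrite inE in wA.
by move=> z tz; apply: wall; rewrite inE.
Qed.

Lemma oth_out_uniq t h z : O t h -> O t z -> z != h -> z = oth_out t h.
Proof.
by move=> th tz zh; case: (oth_outP th) => _ _ /(_ z tz) [E|//]; rewrite E eqxx in zh.
Qed.

Lemma oth_in_uniq t h z : O t h -> O z h -> z != t -> z = oth_in h t.
Proof.
by move=> th tz zh; case: (oth_inP th) => _ _ /(_ z tz) [E|//]; rewrite E eqxx in zh.
Qed.

Lemma oth_outK t h : O t h -> oth_out t (oth_out t h) = h.
Proof.
move=> th; case: (oth_outP th) => tw wh _.
by symmetry; apply: oth_out_uniq => //; rewrite eq_sym.
Qed.

Lemma oth_inK t h : O t h -> oth_in h (oth_in h t) = t.
Proof.
move=> th; case: (oth_inP th) => tw wh _.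
by symmetry; apply: oth_in_uniq => //; rewrite eq_sym.
Qed.

Lemma oth_out_G g t h : g \in G -> O t h -> g (oth_out t h) = oth_out (g t) (g h).
Proof.
move=> gG th; case: (oth_outP th) => tw wh _.
apply: oth_out_uniq; rewrite ?O_G //.
by apply: contra wh => /eqP /perm_inj ->.
Qed.

Lemma oth_in_G g t h : g \in G -> O t h -> g (oth_in h t) = oth_in (g h) (g t).
Proof.
move=> gG th; case: (oth_inP th) => tw wh _.
apply: oth_in_uniq; rewrite ?O_G //.
by apply: contra wh => /eqP /perm_inj ->.
Qed.

Definition Arc := {p : T * T | O p.1 p.2}.
Definition a0 : Arc := exist _ (x0, y0) O00.
Definition tl (c : Arc) := (val c).1.
Definition hd (c : Arc) := (val c).2.
Definition mkA t h : Arc := insubd a0 (t, h).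

Lemma arcO c : O (tl c) (hd c).
Proof. exact: (valP c). Qed.

Lemma mkA_tl t h : O t h -> tl (mkA t h) = t.
Proof. by move=> th; rewrite /tl /mkA val_insubd /= th. Qed.

Lemma mkA_hd t h : O t h -> hd (mkA t h) = h.
Proof. by move=> th; rewrite /hd /mkA val_insubd /= th. Qed.

Lemma arc_eq c c' : tl c = tl c' -> hd c = hd c' -> c = c'.
Proof.
move=> h1 h2; apply: val_inj; move: h1 h2; rewrite /tl /hd.
by case: (val c) => a b; case: (val c') => a' b' /= -> ->.
Qed.

Definition so c := mkA (tl c) (oth_out (tl c) (hd c)).
Definition si c := mkA (oth_in (hd c) (tl c)) (hd c).
Definition tau c := so (si c).

Lemma so_tl c : tl (so c) = tl c.
Proof. by rewrite mkA_tl //; case: (oth_outP (arcO c)). Qed.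
Lemma so_hd c : hd (so c) = oth_out (tl c) (hd c).
Proof. by rewrite mkA_hd //; case: (oth_outP (arcO c)). Qed.
Lemma si_hd c : hd (si c) = hd c.
Proof. by rewrite mkA_hd //; case: (oth_inP (arcO c)). Qed.
Lemma si_tl c : tl (si c) = oth_in (hd c) (tl c).
Proof. by rewrite mkA_tl //; case: (oth_inP (arcO c)). Qed.

Lemma soK c : so (so c) = c.
Proof. by apply: arc_eq; rewrite ?so_tl // !so_hd so_tl oth_outK // arcO. Qed.
Lemma siK c : si (si c) = c.
Proof. by apply: arc_eq; rewrite ?si_hd // !si_tl si_hd oth_inK // arcO. Qed.

Lemma so_neq c : so c != c.
Proof.
apply/negP => /eqP E; have := congr1 hd E; rewrite so_hd => /eqP.
by case: (oth_outP (arcO c)) => _ /negbTE ->.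
Qed.
Lemma si_neq c : si c != c.
Proof.
apply/negP => /eqP E; have := congr1 tl E; rewrite si_tl => /eqP.
by case: (oth_inP (arcO c)) => _ /negbTE ->.
Qed.

Lemma tau_inj : injective tau.
Proof.
by apply: (can_inj (g := fun c => si (so c))) => c; rewrite /tau soK siK.
Qed.

Lemma tau_tl c : tl (tau c) = tl (si c).
Proof. by rewrite /tau so_tl. Qed.

Lemma out_arc c c' : tl c = tl c' -> c' = c \/ c' = so c.
Proof.
move=> E; case: (oth_outP (arcO c)) => _ _ /(_ (hd c')).
rewrite E => /(_ (arcO c')) [h|h]; [left|right]; apply: arc_eq => //.
by rewrite so_tl.
by rewrite so_hd E.
Qed.

Lemma in_arc c c' : hd c = hd c' -> c' = c \/ c' = si c.
Proof.
move=> E; case: (oth_inP (arcO c)) => _ _ /(_ (tl c')).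
rewrite E => /(_ (arcO c')) [h|h]; [left|right]; apply: arc_eq => //.
by rewrite si_tl E.
by rewrite si_hd.
Qed.

Definition gA (g : {perm T}) c := mkA (g (tl c)) (g (hd c)).

Lemma gA_tl g c : g \in G -> tl (gA g c) = g (tl c).
Proof. by move=> gG; rewrite mkA_tl // O_G // arcO. Qed.
Lemma gA_hd g c : g \in G -> hd (gA g c) = g (hd c).
Proof. by move=> gG; rewrite mkA_hd // O_G // arcO. Qed.

Lemma gA_so g c : g \in G -> gA g (so c) = so (gA g c).
Proof.
move=> gG; apply: arc_eq; rewrite ?gA_tl ?so_tl ?gA_tl ?gA_hd ?so_hd //.
by rewrite gA_tl ?gA_hd // oth_out_G // arcO.
Qed.

Lemma gA_si g c : g \in G -> gA g (si c) = si (gA g c).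
Proof.
move=> gG; apply: arc_eq; rewrite ?gA_hd ?si_hd ?gA_hd //.
by rewrite gA_tl // !si_tl gA_hd ?gA_tl // oth_in_G // arcO.
Qed.

Lemma gA_tau g c : g \in G -> gA g (tau c) = tau (gA g c).
Proof. by move=> gG; rewrite /tau gA_so ?gA_si. Qed.

Lemma gA_iter g c n : g \in G -> gA g (iter n tau c) = iter n tau (gA g c).
Proof. by move=> gG; elim: n => [|n IH] //=; rewrite gA_tau // IH. Qed.

Lemma arcTr c c' : exists2 g, g \in G & gA g c = c'.
Proof.
have [g gG [h1 h2]] := arcT (arcO c) (arcO c').
by exists g => //; apply: arc_eq; rewrite ?gA_tl ?gA_hd.
Qed.

Lemma so_inj : injective so.
Proof. exact: (can_inj soK). Qed.

Lemma tau_si c : tau (si c) = so c.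
Proof. by rewrite /tau siK. Qed.

Lemma so_tau c : so (tau c) = si c.
Proof. by rewrite /tau soK. Qed.

Lemma L_out n c : iter n tau c != so c.
Proof.
elim/ltn_ind: n c => n IH c.
case: n IH => [|[|m]] IH.
- by rewrite /= eq_sym so_neq.
- apply/negP => /eqP /= E; move: E; rewrite /tau => /so_inj E.
  by move: (si_neq c); rewrite E eqxx.
- apply/negP => /eqP E.
  have E2 : iter m.+1 tau c = si c.
    by apply: tau_inj; rewrite tau_si -E.
  have := IH m (ltnW (ltnSn m.+1)) (tau c); rewrite so_tau -E2 -iterSr.
  by rewrite eqxx.
Qed.

Lemma L_in n c : iter n tau c != si c.
Proof.
apply/negP => /eqP E; have := L_out n.+1 c; by rewrite iterS E tau_si eqxx.
Qed.

Lemma iter_si_iter j c : iter j tau (si (iter j tau c)) = si c.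
Proof.
elim: j c => [|j IH] c //=.
rewrite -iterS iterSr.
have -> : tau (si (tau (iter j tau c))) = si (iter j tau c).
  by rewrite /tau siK soK.
exact: IH.
Qed.

Lemma L_deg j c : hd (iter j tau c) != tl c.
Proof.
apply/negP => /eqP Q.
have Qall : forall b, hd (iter j tau b) = tl b.
  move=> b; have [g gG <-] := arcTr c b.
  by rewrite -gA_iter // gA_hd // Q gA_tl.
set d := si (iter j tau c).
have h1 := Qall d; rewrite /d iter_si_iter si_hd si_tl in h1.
have h2 : hd d = tl c by rewrite /d si_hd.
have := arcO d; rewrite h2 /d si_tl -h1 => H.
exact: (O_asym (arcO c) H).
Qed.

Definition orb c := orbit tau c.
Definition cyc c := flat2 tl hd (orb c).
Definition edge c : {set T} := [set tl c; hd c].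

Lemma orb_iter c c1 c2 : c1 \in orb c -> c2 \in orb c -> exists k, c2 = iter k tau c1.
Proof.
rewrite /orb -!fconnect_orbit => h1 h2.
have h : fconnect tau c1 c2.
  by apply: connect_trans h2; rewrite (fconnect_sym tau_inj).
by exists (findex tau c1 c2); rewrite iter_findex.
Qed.

Lemma orb_tau c b : b \in orb c -> tau b \in orb c.
Proof. by move=> h; apply: mem_orbit. Qed.

Lemma tl_inj_orb c : {in orb c &, injective tl}.
Proof.
move=> c1 c2 h1 h2 E; case: (out_arc E) => // E2.
have [k Ek] := orb_iter h1 h2; move: (L_out k c1); rewrite -Ek E2 => /eqP H; by exfalso; apply: H.
Qed.

Lemma hd_inj_orb c : {in orb c &, injective hd}.
Proof.
move=> c1 c2 h1 h2 E; case: (in_arc E) => // E2.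
have [k Ek] := orb_iter h1 h2; move: (L_in k c1); rewrite -Ek E2 => /eqP H; by exfalso; apply: H.
Qed.

Lemma tl_hd_orb c : {in orb c &, forall c1 c2, tl c1 != hd c2}.
Proof.
move=> c1 c2 h1 h2; have [k ->] := orb_iter h1 h2; by rewrite eq_sym L_deg.
Qed.

Lemma uniq_cyc c : uniq (cyc c).
Proof.
apply: uniq_flat2; [exact: orbit_uniq|exact: tl_inj_orb|exact: hd_inj_orb|exact: tl_hd_orb].
Qed.

Lemma tau_neq c : tau c != c.
Proof.
apply/negP => /eqP E; have := congr1 tl E; rewrite tau_tl si_tl => /eqP.
by case: (oth_inP (arcO c)) => _ /negbTE ->.
Qed.

Lemma size_orb c : 2 <= size (orb c).
Proof.
have -> : 2 = size [:: tau c; c] by [].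
apply: uniq_leq_size; first by rewrite /= inE tau_neq.
move=> z; rewrite !inE => /orP [] /eqP ->; last exact: in_orbit.
by apply: orb_tau; exact: in_orbit.
Qed.

Lemma size_cyc c : 3 <= size (cyc c).
Proof. by rewrite /cyc size_flat2; have := size_orb c; case: (size (orb c)) => [|[|n]]. Qed.

Definition AR c x y := has (fun b => ((tl b == x) && (hd b == y)) ||
   ((hd b == x) && (tl (tau b) == y))) (orb c).

Lemma orb_cons c : exists s, orb c = c :: s.
Proof.
rewrite /orb /orbit -orderSpred /=; by eexists.
Qed.

Lemma cycle_AR c : path.cycle (AR c) (cyc c).
Proof.
have [s Es] := orb_cons c.
rewrite /cyc Es; apply: (@cycle_flat2 _ _ _ _ (frel tau)).
- by move=> b hb; apply/hasP; exists b; rewrite ?Es // !eqxx.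
- by move=> b b' hb /eqP <-; apply/hasP; exists b; rewrite ?Es // !eqxx orbT.
- by rewrite -Es; apply: (cycle_orbit tau_inj).
Qed.

Lemma mem_cyc c x : (x \in cyc c) = has (fun b => (x == tl b) || (x == hd b)) (orb c).
Proof. exact: mem_flat2. Qed.

Lemma AR_inv c x y : AR c x y ->
  (x \in map tl (orb c)) && (y \notin map tl (orb c)) && O x y \/
  (x \notin map tl (orb c)) && (y \in map tl (orb c)) && O y x.
Proof.
have notl : forall b, b \in orb c -> hd b \notin map tl (orb c).
  move=> b hb; apply/mapP => [[b' hb' E]].
  by move: (tl_hd_orb hb' hb); rewrite E eqxx.
case/hasP => b hb /orP [/andP [/eqP <- /eqP <-]|/andP [/eqP <- /eqP <-]].
- left; rewrite map_f // notl // arcO //.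
- right; rewrite notl // map_f ?orb_tau //.
  by rewrite tau_tl -(si_hd b) arcO.
Qed.

Lemma AR_e c x y : AR c x y -> e x y.
Proof.
case/AR_inv => /andP [_ /O_e] //; by rewrite esym.
Qed.

Lemma alt_cyc c : alternating O (cyc c).
Proof.
apply/allP => x xc.
have h1 := AR_inv (next_cycle (cycle_AR c) xc).
have h2 := AR_inv (prev_cycle (cycle_AR c) xc).
case: h1 => /andP [/andP [b1 b2] o1]; case: h2 => /andP [/andP [b3 b4] o2].
- by rewrite b1 in b4.
- by rewrite o1 o2 orbT.
- by rewrite o1 o2.
- by rewrite b4 in b1.
Qed.

Lemma altc_cyc c : alt_cycle e O (cycle_edges (cyc c)).
Proof.
exists (cyc c); split => //; [exact: uniq_cyc|exact: size_cyc| |exact: alt_cyc].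
exact: (sub_cycle (@AR_e c) (cycle_AR c)).
Qed.

Lemma cyc_edgeP c E : E \in cycle_edges (cyc c) ->
  exists2 b, b \in orb c & E = edge b \/ E = edge (si b).
Proof.
case/mem_cycle_edges => x xc ->.
case/hasP: (next_cycle (cycle_AR c) xc) => b hb /orP [/andP [/eqP <- /eqP <-]|/andP [/eqP <- /eqP <-]].
  by exists b => //; left.
exists b => //; right; by rewrite /edge si_hd -tau_tl setUC.
Qed.

Lemma edges_at (s : seq T) x : uniq s -> x \in s ->
  [set x; next s x] \in cycle_edges s /\ [set x; prev s x] \in cycle_edges s.
Proof.
move=> us xs; split; apply/mem_cycle_edges.
  by exists x.
by exists (prev s x); rewrite ?mem_prev // next_prev // setUC.
Qed.

Lemma closure (s : seq T) c : uniq s -> 3 <= size s -> alternating O s ->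
  edge c \in cycle_edges s ->
  edge (so c) \in cycle_edges s /\ edge (si c) \in cycle_edges s.
Proof.
move=> us ss alt.
have th := arcO c.
have other : forall x y, x \in s -> (y == next s x) || (y == prev s x) ->
    exists w, [/\ [set x; w] \in cycle_edges s, w != y &
      (O y x && O w x) || (O x y && O x w)].
  move=> x y xs /orP [] /eqP ->.
  - exists (prev s x); split; first by case: (edges_at us xs).
      by apply: prev_neq_next.
    by move/allP: alt => /(_ x xs); rewrite andbC [O x _ && _]andbC.
  - exists (next s x); split; first by case: (edges_at us xs).
      by rewrite eq_sym; apply: prev_neq_next.
    by move/allP: alt => /(_ x xs).
case/mem_cycle_edges => z zs /set2_eq H.
have [ts hs nt nh] : [/\ tl c \in s, hd c \in s,
    (hd c == next s (tl c)) || (hd c == prev s (tl c)) &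
    (tl c == next s (hd c)) || (tl c == prev s (hd c))].
  case: H => [[-> ->]|[-> ->]]; rewrite ?mem_next ?zs ?prev_next ?eqxx ?orbT //.
have notht : ~~ O (hd c) (tl c) by apply/negP => H'; exact: (O_asym th H').
split.
- have [w [wC wh wO]] := other _ _ ts nt.
  have tw : O (tl c) w by move: wO; rewrite (negbTE notht) th /=.
  have -> : edge (so c) = [set tl c; w].
    by rewrite /edge so_tl so_hd -(oth_out_uniq th tw wh).
  exact: wC.
- have [w [wC wh wO]] := other _ _ hs nh.
  have wt : O w (hd c) by move: wO; rewrite (negbTE notht) th /= orbF.
  have -> : edge (si c) = [set hd c; w].
    by rewrite /edge si_hd si_tl -(oth_in_uniq th wt wh) setUC.
  exact: wC.
Qed.

Lemma closure_alt C c : alt_cycle e O C -> edge c \in C ->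
  edge (so c) \in C /\ edge (si c) \in C.
Proof.
by case=> s [us ss _ alt ->]; apply: closure.
Qed.

Definition Cyc c := cycle_edges (cyc c).

Lemma edge_Cyc c : edge c \in Cyc c.
Proof.
have [s Es] := orb_cons c.
apply/mem_cycle_edges; exists (tl c); rewrite /cyc Es ?flat2_cons ?inE ?eqxx //.
rewrite next_head //.
apply/negP => /eqP E; have := arcO c; rewrite E.
by move/O_e; rewrite eirr.
Qed.

Lemma Cyc_sub C c : alt_cycle e O C -> edge c \in C -> Cyc c \subset C.
Proof.
move=> aC ec.
have Hk : forall k, edge (iter k tau c) \in C.
  elim=> [|k IH] //=; rewrite /tau.
  have [_ h] := closure_alt aC IH.
  by have [] := closure_alt aC h.
apply/subsetP => E /cyc_edgeP [b hb [->|->]].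
  by have [k ->] := orb_iter (in_orbit tau c) hb.
by have [k ->] := orb_iter (in_orbit tau c) hb; have [] := closure_alt aC (Hk k).
Qed.

Hypothesis radH : forall C, alt_cycle e O C -> #|C| = 6.
Hypothesis attH : forall C D, alt_cycle e O C -> alt_cycle e O D -> C != D ->
     cycle_verts C :&: cycle_verts D != set0 ->
     #|cycle_verts C :&: cycle_verts D| = 2.

Lemma U C c : alt_cycle e O C -> edge c \in C -> C = Cyc c.
Proof.
move=> aC ec; symmetry; apply/eqP; rewrite eqEcard Cyc_sub //.
by rewrite (radH aC) (radH (altc_cyc c)).
Qed.

Lemma imset2_perm (g : {perm T}) x y : g @: [set x; y] = [set g x; g y].
Proof. by rewrite imsetU1 imset_set1. Qed.

Lemma act_cycle_edges g (s : seq T) : uniq s ->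
  act_cycle g (cycle_edges s) = cycle_edges (map g s).
Proof.
move=> us; apply/setP => E; apply/imsetP/mem_cycle_edges.
- case=> F /mem_cycle_edges [x xs ->] ->.
  by exists (g x); rewrite ?map_f // (next_map (@perm_inj _ g) us) ?imset2_perm.
- case=> y /mapP [x xs ->] ->; exists [set x; next s x].
    by apply/mem_cycle_edges; exists x.
  by rewrite (next_map (@perm_inj _ g) us) ?imset2_perm.
Qed.

Lemma alt_act g C : g \in G -> alt_cycle e O C -> alt_cycle e O (act_cycle g C).
Proof.
move=> gG [s [us ss cs alt ->]]; exists (map g s); split.
- by rewrite map_inj_uniq //; apply: perm_inj.
- by rewrite size_map.
- rewrite cycle_map; apply: sub_cycle cs => x y /=; by rewrite autG.
- apply/allP => y /mapP [x xs ->].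
  rewrite (next_map (@perm_inj _ g) us) (prev_map (@perm_inj _ g) us) !O_G //.
  by move/allP: alt => /(_ x xs).
- by rewrite act_cycle_edges.
Qed.

Lemma verts_act (g : {perm T}) (C : {set {set T}}) : cycle_verts (act_cycle g C) = g @: cycle_verts C.
Proof.
apply/setP => z; apply/bigcupP/imsetP.
- case=> F /imsetP [E EC ->] /imsetP [x xE ->]; exists x => //.
  by apply/bigcupP; exists E.
- case=> x /bigcupP [E EC xE] ->; exists (g @: E); first by apply/imsetP; exists E.
  by apply/imsetP; exists x.
Qed.

Lemma Cyc_so c : Cyc (so c) = Cyc c.
Proof.
have [h _] := closure_alt (altc_cyc c) (edge_Cyc c).
by symmetry; apply: U => //; apply: altc_cyc.
Qed.

Lemma Cyc_si c : Cyc (si c) = Cyc c.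
Proof.
have [_ h] := closure_alt (altc_cyc c) (edge_Cyc c).
by symmetry; apply: U => //; apply: altc_cyc.
Qed.

Lemma Cyc_tau c : Cyc (tau c) = Cyc c.
Proof. by rewrite /tau Cyc_so Cyc_si. Qed.

Lemma Cyc_iter k c : Cyc (iter k tau c) = Cyc c.
Proof. by elim: k => [|k IH] //=; rewrite Cyc_tau. Qed.

Lemma Cyc_orb c b : b \in orb c -> Cyc b = Cyc c.
Proof. by move=> hb; have [k ->] := orb_iter (in_orbit tau c) hb; rewrite Cyc_iter. Qed.

Lemma Cyc_tl c c' : tl c = tl c' -> Cyc c = Cyc c'.
Proof. by case/out_arc => ->; rewrite ?Cyc_so. Qed.

Lemma Cyc_hd c c' : hd c = hd c' -> Cyc c = Cyc c'.
Proof. by case/in_arc => ->; rewrite ?Cyc_si. Qed.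

Lemma Cyc_act g c : g \in G -> act_cycle g (Cyc c) = Cyc (gA g c).
Proof.
move=> gG; apply: U; first by apply: alt_act => //; apply: altc_cyc.
apply/imsetP; exists (edge c); first exact: edge_Cyc.
by rewrite /edge imset2_perm gA_tl ?gA_hd.
Qed.

Lemma edge_inj c c' : edge c = edge c' -> c = c'.
Proof.
case/set2_eq => [[h1 h2]|[h1 h2]]; first exact: arc_eq.
by have := arcO c; rewrite h1 h2 => H; case: (O_asym (arcO c') H).
Qed.

Lemma size_orb3 c : size (orb c) = 3.
Proof.
have := radH (altc_cyc c); rewrite /Cyc card_cycle_edges ?uniq_cyc ?size_cyc //.
rewrite /cyc size_flat2 -addnn.
by case: (size (orb c)) => [|[|[|[|n]]]] //; rewrite !addSn !addnS.
Qed.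

Lemma orb3 c : orb c = [:: c; tau c; tau (tau c)].
Proof. by rewrite /orb /orbit -size_orbit -/(orb c) size_orb3. Qed.

Lemma tau3 c : tau (tau (tau c)) = c.
Proof.
have := iter_order tau_inj c; by rewrite -size_orbit -/(orb c) size_orb3.
Qed.

Lemma cyc6 c : cyc c = [:: tl c; hd c; tl (tau c); hd (tau c);
   tl (tau (tau c)); hd (tau (tau c))].
Proof. by rewrite /cyc orb3. Qed.

Lemma ex_out v : exists c : Arc, tl c == v.
Proof.
have : 0 < #|[set y | O v y]| by rewrite outdeg.
case/card_gt0P => y; rewrite inE => vy; exists (mkA v y); by rewrite mkA_tl.
Qed.

Lemma ex_in v : exists c : Arc, hd c == v.
Proof.
have : 0 < #|[set y | O y v]| by rewrite indeg.
case/card_gt0P => y; rewrite inE => vy; exists (mkA y v); by rewrite mkA_hd.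
Qed.

Definition oa v := odflt a0 [pick c | tl c == v].
Definition ia v := odflt a0 [pick c | hd c == v].

Lemma oa_tl v : tl (oa v) = v.
Proof.
rewrite /oa; case: pickP => [c /eqP //|H]; have [c hc] := ex_out v.
by move: (H c); rewrite hc.
Qed.

Lemma ia_hd v : hd (ia v) = v.
Proof.
rewrite /ia; case: pickP => [c /eqP //|H]; have [c hc] := ex_in v.
by move: (H c); rewrite hc.
Qed.

Definition Cout v := Cyc (oa v).
Definition Cin v := Cyc (ia v).
Definition Vc (C : {set {set T}}) := cycle_verts C.

Lemma Cout_tl c : Cout (tl c) = Cyc c.
Proof. by apply: Cyc_tl; rewrite oa_tl. Qed.

Lemma Cin_hd c : Cin (hd c) = Cyc c.
Proof. by apply: Cyc_hd; rewrite ia_hd. Qed.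

Lemma alt_Cout v : alt_cycle e O (Cout v).
Proof. exact: altc_cyc. Qed.

Lemma alt_Cin v : alt_cycle e O (Cin v).
Proof. exact: altc_cyc. Qed.

Lemma verts_Cyc c : Vc (Cyc c) = [set x in cyc c].
Proof. exact: cover_cycle_edges. Qed.

Lemma v_Cout v : v \in Vc (Cout v).
Proof.
rewrite /Cout verts_Cyc inE mem_cyc; apply/hasP; exists (oa v).
  exact: in_orbit.
by rewrite oa_tl eqxx.
Qed.

Lemma v_Cin v : v \in Vc (Cin v).
Proof.
rewrite /Cin verts_Cyc inE mem_cyc; apply/hasP; exists (ia v).
  exact: in_orbit.
by rewrite ia_hd eqxx orbT.
Qed.

Lemma Cout_neq v : Cout v != Cin v.
Proof.
apply/negP => /eqP E.
have : edge (ia v) \in Cyc (oa v) by rewrite -/(Cout v) E; apply: edge_Cyc.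
case/cyc_edgeP => b hb [] /edge_inj Eb.
- move: (tl_hd_orb (in_orbit tau (oa v)) hb); by rewrite -Eb ia_hd oa_tl eqxx.
- move: (tl_hd_orb (in_orbit tau (oa v)) hb); by rewrite -(si_hd b) -Eb ia_hd oa_tl eqxx.
Qed.

Lemma edge_mkA u v : O u v -> edge (mkA u v) = [set u; v].
Proof. by move=> uv; rewrite /edge mkA_tl ?mkA_hd. Qed.

Lemma VC C x : alt_cycle e O C -> x \in Vc C -> C = Cout x \/ C = Cin x.
Proof.
move=> aC; case: (aC) => s [us ss cs alt EC].
case/bigcupP => E EC' xE.
have : E \in cycle_edges s by rewrite -EC.
case/mem_cycle_edges => z zs Ez.
have ez := next_cycle cs zs.
have key : forall u w, O u w -> E = [set u; w] -> C = Cout x \/ C = Cin x.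
  move=> u w uw Euw; have EC2 : edge (mkA u w) \in C by rewrite edge_mkA // -Euw.
  rewrite (U aC EC2); move: xE; rewrite Euw !inE => /orP [] /eqP ->.
  - by left; rewrite -(Cout_tl (mkA u w)) (mkA_tl uw).
  - by right; rewrite -(Cin_hd (mkA u w)) (mkA_hd uw).
case/orP: (e_O ez) => h; first exact: (key _ _ h).
by apply: (key _ _ h); rewrite Ez setUC.
Qed.

Lemma Cout_G g v : g \in G -> Cout (g v) = act_cycle g (Cout v).
Proof.
move=> gG; rewrite /Cout Cyc_act //; apply: Cyc_tl; by rewrite gA_tl // !oa_tl.
Qed.

Lemma Cin_G g v : g \in G -> Cin (g v) = act_cycle g (Cin v).
Proof.
move=> gG; rewrite /Cin Cyc_act //; apply: Cyc_hd; by rewrite gA_hd // !ia_hd.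
Qed.

Definition I v := Vc (Cout v) :&: Vc (Cin v).

Lemma I_card v : #|I v| = 2.
Proof.
apply: attH; rewrite ?Cout_neq //; try exact: altc_cyc.
by apply/set0Pn; exists v; rewrite inE v_Cout v_Cin.
Qed.

Lemma v_I v : v \in I v.
Proof. by rewrite inE v_Cout v_Cin. Qed.

Lemma I_G g v : g \in G -> I (g v) = g @: I v.
Proof.
move=> gG; rewrite /I Cout_G // Cin_G // /Vc !verts_act imsetI //.
by move=> a b _ _; apply: perm_inj.
Qed.

Lemma I_two v w : w \in I v -> w != v -> I v = [set v; w].
Proof.
move=> wI wv; symmetry; apply/eqP; rewrite eqEcard I_card cards2 eq_sym wv andbT.
by apply/subsetP => z /set2P [] ->; rewrite ?v_I.
Qed.

Lemma noadj v w : w \in I v -> O v w -> False.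
Proof.
move=> wI vw.
have wv : w != v by apply/negP => /eqP E; move: (O_e vw); rewrite E eirr.
have Cw : Cin w = Cout v.
  by rewrite -{1}(mkA_hd vw) Cin_hd -(Cout_tl (mkA v w)) (mkA_tl vw).
have Cv : Cin v = Cout w.
  move: wI; rewrite inE => /andP [_ /(VC (alt_Cin v))] [//|E].
  by move: (Cout_neq v); rewrite E Cw eqxx.
have [g gG gv] := vtxT v w.
have Iw : I w = I v by rewrite /I Cw -Cv setIC.
have := I_G v gG; rewrite gv Iw (I_two wI wv) imset2_perm gv => E.
have : g w \in [set v; w] by rewrite E !inE eqxx orbT.
rewrite !inE => /orP [] /eqP gw.
- by have := vw; rewrite -(O_G v w gG) gv gw => H; apply: (O_asym vw H).
- have := perm_inj (etrans gv (Logic.eq_sym gw)) => vw'; by rewrite vw' eqxx in wv.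
Qed.
Lemma mem_cyc6 c x : (x \in Vc (Cyc c)) = (x \in [:: tl c; hd c; tl (tau c); hd (tau c);
      tl (tau (tau c)); hd (tau (tau c))]).
Proof. by rewrite verts_Cyc inE cyc6. Qed.

Lemma Cout_v_Cyc v : Cout v = Cyc (oa v).
Proof. by []. Qed.

Lemma srcs v z : Cout z = Cout v ->
  [\/ z = tl (oa v), z = tl (tau (oa v)) | z = tl (tau (tau (oa v)))].
Proof.
move=> E; set c := oa v.
have zV : z \in Vc (Cyc c) by rewrite -/(Cout v) -E v_Cout.
have sink : forall b, Cyc b = Cyc c -> z = hd b -> False.
  move=> b Eb zb; move: (Cout_neq z); by rewrite {2}zb Cin_hd Eb E eqxx.
move: zV; rewrite mem_cyc6 !inE.
case/orP => [/eqP zE|]; first by constructor 1.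
case/orP => [/eqP zE|]; first by case: (sink c).
case/orP => [/eqP zE|]; first by constructor 2.
case/orP => [/eqP zE|]; first by case: (sink (tau c)); rewrite ?Cyc_tau.
case/orP => [/eqP zE|]; first by constructor 3.
move/eqP => zE; by case: (sink (tau (tau c))); rewrite ?Cyc_tau.
Qed.

Lemma uniq6 c : uniq [:: tl c; hd c; tl (tau c); hd (tau c);
   tl (tau (tau c)); hd (tau (tau c))].
Proof. by rewrite -cyc6 uniq_cyc. Qed.

Lemma nosame' v w u : w != v -> u != v -> u != w ->
  Cout w = Cout v -> Cin w = Cin v -> Cout u = Cout v ->
  (forall z, Cout z = Cout v -> [\/ z = v, z = w | z = u]) -> False.
Proof.
move=> wv uv uw Ow Iw Ou allz.
have [g gG gv] := vtxT v u.
have wI : w \in I v by rewrite inE -Ow -Iw v_Cout v_Cin.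
have gwI : g w \in I u by rewrite -gv I_G // imset_f.
have Ogw : Cout (g w) = Cout v by rewrite Cout_G // Ow -Cout_G // gv.
have gwu : g w != u.
  by apply/negP => /eqP; rewrite -gv => /perm_inj E; rewrite E eqxx in wv.
have Cu : Cin u = Cin v.
  move: gwI; rewrite inE => /andP [_ /(VC (alt_Cin u))] [E|E].
    by move: (Cout_neq u); rewrite E Ogw Ou eqxx.
  rewrite E; case: (allz _ Ogw) => gwE; rewrite gwE // ?Iw //.
  by rewrite gwE eqxx in gwu.
have uI : u \in I v by rewrite inE -Ou -Cu v_Cout v_Cin.
move: uI; rewrite (I_two wI wv) !inE => /orP [] /eqP E.
- by rewrite E eqxx in uv.
- by rewrite E eqxx in uw.
Qed.

Lemma nosame v w : w != v -> Cout w = Cout v -> Cin w = Cin v -> False.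
Proof.
move=> wv Ow Iw.
have vc : tl (oa v) = v by rewrite oa_tl.
have := uniq6 (oa v); rewrite /= !inE.
move=> /andP [/norP [_ /norP [d01 /norP [_ /norP [d02 _]]]]].
move=> /andP [_ /andP [/norP [_ /norP [d12 _]] _]].
have O1 : Cout (tl (tau (oa v))) = Cout v by rewrite Cout_tl Cyc_tau.
have O2 : Cout (tl (tau (tau (oa v)))) = Cout v by rewrite Cout_tl !Cyc_tau.
rewrite vc in d01 d02.
case: (srcs Ow) => E.
- by rewrite E vc eqxx in wv.
- apply: (@nosame' v w (tl (tau (tau (oa v))))) => //; rewrite ?E //.
  + by rewrite eq_sym.
  + by rewrite eq_sym.
  + by move=> z /srcs; rewrite vc; case => ->; [apply: Or31 | apply: Or32 | apply: Or33].
- apply: (@nosame' v w (tl (tau (oa v)))) => //; rewrite ?E //.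
  + by rewrite eq_sym.
  + by move=> z /srcs; rewrite vc; case => ->; [apply: Or31 | apply: Or33 | apply: Or32].
Qed.
Lemma src_case v w : w \in I v -> w != v -> Cout w = Cout v -> False.
Proof.
move=> wI wv Ow.
apply: (nosame wv Ow).
move: wI; rewrite inE => /andP [_ /(VC (alt_Cin v))] [E|//].
by move: (Cout_neq v); rewrite E Ow eqxx.
Qed.

Lemma antipode c : hd (tau c) \in I (tl c).
Proof.
set v := tl c.
have [w [wI wv wall]] := two_elems (I_card v) (v_I v).
have wV : w \in Vc (Cyc c) by rewrite -Cout_tl; move: wI; rewrite inE => /andP [].
suff -> : hd (tau c) = w by [].
move: wV; rewrite mem_cyc6 !inE.
case/orP => [/eqP wE|]; first by rewrite wE eqxx in wv.
case/orP => [/eqP wE|]; first by case: (noadj wI); rewrite wE arcO.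
case/orP => [/eqP wE|].
  by case: (src_case wI wv); rewrite wE !Cout_tl Cyc_tau.
case/orP => [/eqP -> //|].
case/orP => [/eqP wE|].
  by case: (src_case wI wv); rewrite wE !Cout_tl !Cyc_tau.
move/eqP => wE; case: (noadj wI).
have := arcO (si (tau (tau c))); by rewrite si_hd -tau_tl tau3 -wE.
Qed.
Lemma dart_char x y : Cout y = Cin x -> Cout x != Cin y -> O y x.
Proof.
move=> E1 E2.
have xV : x \in Vc (Cyc (oa y)) by rewrite -/(Cout y) E1 v_Cin.
have yc : tl (oa y) = y by rewrite oa_tl.
have srcx : forall b, Cyc b = Cyc (oa y) -> x = tl b -> False.
  move=> b Eb xE; move: (Cout_neq x).
  by rewrite -E1 {1}xE Cout_tl Eb eqxx.
move: xV; rewrite mem_cyc6 !inE.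
case/orP => [/eqP xE|].
  by move: (Cout_neq x); rewrite -E1 xE yc eqxx.
case/orP => [/eqP ->|]; first by rewrite -{1}yc arcO.
case/orP => [/eqP xE|]; first by case: (srcx _ (Cyc_tau _) xE).
case/orP => [/eqP xE|].
  have xI : x \in I y by rewrite xE -{2}yc antipode.
  move: xI; rewrite inE => /andP [_ /(VC (alt_Cin y))] [E|E].
    by rewrite E eqxx in E2.
  by move: (Cout_neq y); rewrite E E1 eqxx.
case/orP => [/eqP xE|].
  by case: (srcx (tau (tau (oa y)))); rewrite ?Cyc_tau.
move/eqP => ->.
have := arcO (si (tau (tau (oa y)))); by rewrite si_hd -tau_tl tau3 yc.
Qed.

Lemma adj_char x y : O x y -> Cout x = Cin y /\ Cout y != Cin x.
Proof.
move=> xy.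
have E : Cout x = Cin y.
  by rewrite -{1}(mkA_tl xy) Cout_tl -{2}(mkA_hd xy) Cin_hd.
split => //; apply/negP => /eqP E'.
have yI : y \in I x by rewrite inE E -E' v_Cin v_Cout.
exact: (noadj yI xy).
Qed.

Lemma Cout_inj x y : Cout x = Cout y -> Cin x = Cin y -> x = y.
Proof.
move=> h1 h2; case: (eqVneq y x) => [//|yx].
by case: (nosame yx (Logic.eq_sym h1) (Logic.eq_sym h2)).
Qed.

Lemma Cyc_surj C D : alt_cycle e O C -> alt_cycle e O D -> alt_adj C D ->
  exists x, Cout x = C /\ Cin x = D.
Proof.
move=> aC aD /andP [CD /set0Pn [v]]; rewrite inE => /andP [vC vD].
case: (VC aC vC) => EC; case: (VC aD vD) => ED.
- by rewrite EC ED eqxx in CD.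
- by exists v.
- set w := hd (tau (oa v)).
  have wI : w \in I v by rewrite /w -{2}(oa_tl v) antipode.
  exists w; split; last by rewrite ED /w Cin_hd Cyc_tau.
  move: wI; rewrite inE => /andP [_ /(VC (alt_Cin v))] [E|E].
    by rewrite EC E.
  by move: (Cout_neq v); rewrite E /w Cin_hd Cyc_tau eqxx.
- by rewrite EC ED eqxx in CD.
Qed.
Definition aout v : AltV e O := exist _ (Cout v) (asboolT (alt_Cout v)).
Definition ain v : AltV e O := exist _ (Cin v) (asboolT (alt_Cin v)).

Lemma phi_proof v : alt_rel e O (aout v) (ain v).
Proof.
rewrite /alt_rel /alt_adj /= Cout_neq /=.
by apply/set0Pn; exists v; rewrite inE v_Cout v_Cin.
Qed.

Definition phi v : DartV (alt_rel e O) := exist _ (aout v, ain v) (phi_proof v).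

Lemma phi_surj a : exists x, phi x = a.
Proof.
case: a => [[[C hC] [D hD]] hCD].
have [x [h1 h2]] := Cyc_surj (asboolW hC) (asboolW hD) hCD.
exists x; apply: val_inj => /=; congr pair; apply: val_inj => //=.
Qed.

Lemma phi_inj : injective phi.
Proof.
move=> x y E; have := congr1 val E => /= [[h1 h2]].
exact: Cout_inj h1 h2.
Qed.

Definition Psi a := odflt x0 [pick x | phi x == a].

Lemma PsiK : cancel phi Psi.
Proof.
move=> x; rewrite /Psi; case: pickP => [z /eqP /phi_inj //|H].
by move: (H x); rewrite eqxx.
Qed.

Lemma PsiK' : cancel Psi phi.
Proof. by move=> a; have [x <-] := phi_surj a; rewrite PsiK. Qed.

Lemma aeq u v : (aout u == ain v) = (Cout u == Cin v).
Proof. by rewrite -val_eqE. Qed.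

Lemma main_result :
  [/\ (forall g C, g \in G -> alt_cycle e O C -> alt_cycle e O (act_cycle g C)),
      (forall C1 C2 C3 D1 D2 D3,
         alt_cycle e O C1 -> alt_cycle e O C2 -> alt_cycle e O C3 ->
         alt_cycle e O D1 -> alt_cycle e O D2 -> alt_cycle e O D3 ->
         alt_adj C1 C2 -> alt_adj C2 C3 -> C1 != C3 ->
         alt_adj D1 D2 -> alt_adj D2 D3 -> D1 != D3 ->
         exists2 g, g \in G &
           [/\ act_cycle g C1 = D1, act_cycle g C2 = D2 & act_cycle g C3 = D3])
    & exists Psi : DartV (alt_rel e O) -> T,
        [/\ bijective Psi,
            (forall a b, e (Psi a) (Psi b) = dart_adj a b)
          & (forall a b, dart_arc a b -> O (Psi a) (Psi b)) \/
            (forall a b, dart_arc a b -> O (Psi b) (Psi a))]].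
Proof.
split.
- move=> g C gG aC; exact: alt_act.
- move=> C1 C2 C3 D1 D2 D3 a1 a2 a3 b1 b2 b3 c12 c23 c13 d12 d23 d13.
  have [x [x1 x2]] := Cyc_surj a1 a2 c12.
  have [y [y1 y2]] := Cyc_surj a2 a3 c23.
  have [x' [x1' x2']] := Cyc_surj b1 b2 d12.
  have [y' [y1' y2']] := Cyc_surj b2 b3 d23.
  have yx : O y x by apply: dart_char; rewrite ?x1 ?x2 ?y1 ?y2.
  have yx' : O y' x' by apply: dart_char; rewrite ?x1' ?x2' ?y1' ?y2'.
  have [g gG [gy gx]] := arcT yx yx'.
  exists g => //; split.
  + by rewrite -x1 -Cout_G // gx.
  + by rewrite -x2 -Cin_G // gx.
  + by rewrite -y2 -Cin_G // gy.
- exists Psi; split.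
  + by exists phi; [exact: PsiK'|exact: PsiK].
  + move=> a b; have [x <-] := phi_surj a; have [y <-] := phi_surj b.
    rewrite !PsiK /dart_adj /= !aeq.
    apply/idP/idP.
    * case/e_O/orP => h.
        have [h1 h2] := adj_char h; by rewrite h1 eqxx h2 orbT.
      have [h1 h2] := adj_char h; by rewrite h1 eqxx h2.
    * case/orP => /andP [/eqP h1 h2].
        by rewrite esym; apply: O_e; apply: dart_char.
      by apply: O_e; apply: dart_char => //; rewrite eq_sym.
  + right => a b; have [x <-] := phi_surj a; have [y <-] := phi_surj b.
    rewrite !PsiK /dart_arc /= aeq => /andP [/eqP h1 h2].
    exact: dart_char.
Qed.
End Main.

Theorem proposition2p3 (T : finType) (e : rel T) (G : {group {perm T}})
  (x0 y0 : T) :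
  symmetric e -> irreflexive e ->
  connected_graph e -> tetravalent e ->
  is_aut_group e G -> half_arc_transitive e G ->
  e x0 y0 ->
  let O := arc_orbit G x0 y0 in
  (* rad_G(Gamma) = 3 *)
  (forall C, alt_cycle e O C -> #|C| = 6) ->
  (* att_G(Gamma) = 2 *)
  (forall C D, alt_cycle e O C -> alt_cycle e O D -> C != D ->
     cycle_verts C :&: cycle_verts D != set0 ->
     #|cycle_verts C :&: cycle_verts D| = 2) ->
  [/\ (* G induces an action on Lambda = Alt_G(Gamma) *)
      (forall g C, g \in G -> alt_cycle e O C -> alt_cycle e O (act_cycle g C)),
      (* ... which is transitive on the 2-arcs of Lambda *)
      (forall C1 C2 C3 D1 D2 D3,
         alt_cycle e O C1 -> alt_cycle e O C2 -> alt_cycle e O C3 ->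
         alt_cycle e O D1 -> alt_cycle e O D2 -> alt_cycle e O D3 ->
         alt_adj C1 C2 -> alt_adj C2 C3 -> C1 != C3 ->
         alt_adj D1 D2 -> alt_adj D2 D3 -> D1 != D3 ->
         exists2 g, g \in G &
           [/\ act_cycle g C1 = D1, act_cycle g C2 = D2 & act_cycle g C3 = D3])
    & (* Dart(Lambda) is isomorphic to Gamma via an isomorphism Psi mapping
         the natural orientation to one of the two G-induced orientations *)
      exists Psi : DartV (alt_rel e O) -> T,
        [/\ bijective Psi,
            (forall a b, e (Psi a) (Psi b) = dart_adj a b)
          & (forall a b, dart_arc a b -> O (Psi a) (Psi b)) \/
            (forall a b, dart_arc a b -> O (Psi b) (Psi a))]].
Proof.
move=> esym eirr _ tetra autG hatG exy O radH attH.
exact: (main_result esym eirr tetra autG hatG exy radH attH).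
Qed.
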